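(* In the finite-horizon setting below, fix $(s,a)\in\mathcal{K}$ and a policy $\pi=(\pi_0,\dots,\pi_{H-1})$. Define $u^\pi,u^*\in\mathbb{R}^H$ by $u_h^\pi=(\widehat{P}_\mathcal{K}(\cdot|s,a)-P(\cdot|s,a))\widehat{V}^\pi_{h+1}$ and $u_h^*=(\widehat{P}_\mathcal{K}(\cdot|s,a)-P(\cdot|s,a))\widehat{V}^*_{h+1}$ for $h\in\{0,\dots,H-1\}$. Then for all $h\in\{0,\dots,H-1\}$: $$\widehat{Q}_h^\pi=\widetilde{Q}^\pi_{h,u^\pi},\quad\widehat{Q}_h^*=\widetilde{Q}^{\widehat{\pi}^*}_{h,u^*}=\widetilde{Q}^*_{h,u^*},\quad|u_h^\pi|\le H-h-1,\quad|u_h^*|\le H-h-1.$$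
   Context: A finite-horizon MDP $(\mathcal{S},\mathcal{A},P,(r_h)_{h<H},H)$ has finite $\mathcal{S},\mathcal{A}$, transition kernel $P$, horizon $H$ and step-dependent rewards $r_h$. For a nonstationary policy $\pi=(\pi_0,\dots,\pi_{H-1})$, $\pi_h:\mathcal{S}\to\mathcal{A}$: $V_H^\pi\equiv0$, $Q_h^\pi(s',a')=r_h(s',a')+\sum_{s''}P(s''|s',a')V_{h+1}^\pi(s'')$, $V_h^\pi(s')=Q_h^\pi(s',\pi_h(s'))$; optimal functions $V_h^*,Q_h^*$ are the maxima over policies, attained by an optimal policy. The true model $M$ has stationary reward $r\in[0,1]$ and $P(s'|s,a)=\sum_k\phi_k(s,a)\psi_k(s')$ with the anchor-state assumption: anchors $\mathcal{K}=\{(s_k,a_k)\}_{k=1}^K$, $\lambda_k^{s,a}\ge0$, $\sum_k\lambda_k^{s,a}=1$, $\phi(s,a)=\sum_k\lambda_k^{s,a}\phi(s_k,a_k)$. $\widehat{P}_\mathcal{K}(\cdot|s_k,a_k)$ is the empirical distribution of $N$ samples from $P(\cdot|s_k,a_k)$; $\widehat{M}$ has kernel $\widehat{P}(s'|s'',a'')=\sum_k\lambda_k^{s'',a''}\widehat{P}_\mathcal{K}(s'|s_k,a_k)$ and reward $r$ at every step; hats denote its value/Q-functions, $\widehat{\pi}^*$ is its optimal policy. Auxiliary model: for $(s,a)=(s_j,a_j)\in\mathcal{K}$ and $u=(u_0,\dots,u_{H-1})\in\mathbb{R}^H$, $\widetilde{M}_{s,a,u}$ has kernel $\widetilde{P}(s'|s'',a'')=\sum_k\lambda_k^{s'',a''}\widetilde{P}_\mathcal{K}(s'|s_k,a_k)$,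 with $\widetilde{P}_\mathcal{K}=\widehat{P}_\mathcal{K}$ on anchors $k\ne j$ and $\widetilde{P}_\mathcal{K}(\cdot|s_j,a_j)=P(\cdot|s,a)$, and step-$h$ reward $r+u_h\Lambda^{s,a}$ where $\Lambda^{s,a}(s'',a'')=\lambda_j^{s'',a''}$. $\widetilde{Q}^\pi_{h,u}$, $\widetilde{Q}^*_{h,u}$ denote its Q-functions at step $h$. *)

(* Defs.v *)
From HB Require Import structures.
From mathcomp Require Import all_boot all_order all_algebra.
From mathcomp Require Import classical_sets reals.
Set Implicit Arguments. Unset Strict Implicit. Unset Printing Implicit Defensive.
Import Order.TTheory GRing.Theory Num.Theory.
Local Open Scope ring_scope.
Local Open Scope classical_set_scope.

Section FiniteHorizon.
Variables (R : realType) (S A : finType).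

(* Kernel convention: P s a s' = P(s'|s,a).  Step rewards rw h s a = r_h(s,a).
   Nonstationary policies: pi h s = pi_h(s) (only h < H matters). *)

(* Value with n steps remaining, starting at step h. *)
Fixpoint Vrem (P : S -> A -> S -> R) (rw : nat -> S -> A -> R)
  (pi : nat -> S -> A) (n h : nat) (s : S) : R :=
  match n with
  | 0 => 0
  | n'.+1 => rw h s (pi h s) + \sum_(s' : S) P s (pi h s) s' * Vrem P rw pi n' h.+1 s'
  end.

Definition Vpi P rw (H : nat) pi (h : nat) (s : S) : R := Vrem P rw pi (H - h) h s.

Definition Qpi P rw (H : nat) pi (h : nat) (s : S) (a : A) : R :=
  rw h s a + \sum_(s' : S) P s a s' * Vpi P rw H pi h.+1 s'.

Definition Vstar P rw (H : nat) (h : nat) (s : S) : R :=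
  sup (range (fun pi : nat -> S -> A => Vpi P rw H pi h s)).
Definition Qstar P rw (H : nat) (h : nat) (s : S) (a : A) : R :=
  sup (range (fun pi : nat -> S -> A => Qpi P rw H pi h s a)).

Variable K : nat.

Definition anchor_kernel (lam : S -> A -> 'I_K -> R) (PK : 'I_K -> S -> R)
  : S -> A -> S -> R :=
  fun s'' a'' s' => \sum_(k < K) lam s'' a'' k * PK k s'.

Definition empirical (N : nat) (smp : 'I_K -> 'I_N -> S) : 'I_K -> S -> R :=
  fun k s' => (\sum_(i < N) ((smp k i == s') : nat)%:R) / N%:R.

(* Auxiliary anchor distributions: anchor j replaced by the true P(.|s,a). *)
Definition tildePK (PK : 'I_K -> S -> R) (j : 'I_K) (Pj : S -> R) : 'I_K -> S -> R :=
  fun k s' => if k == j then Pj s' else PK k s'.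

(* Auxiliary reward at step h: r + u_h * Lambda^{s,a}, Lambda(s'',a'') = lam_j^{s'',a''}. *)
Definition tilde_reward (r : S -> A -> R) (lam : S -> A -> 'I_K -> R) (j : 'I_K)
  (u : nat -> R) : nat -> S -> A -> R :=
  fun h s'' a'' => r s'' a'' + u h * lam s'' a'' j.

End FiniteHorizon.

(* Main.v *)
Require Import Defs.
From HB Require Import structures.
From mathcomp Require Import all_boot all_order all_algebra.
From mathcomp Require Import classical_sets reals.
From mathcomp Require Import ring lra.
Import Order.TTheory GRing.Theory Num.Theory.
Local Open Scope ring_scope.

Section Gen.
Variables (R : realType) (S A : finType).

Lemma sup_attained (T : Type) (f : T -> R) x0 :
  (forall x, f x <= f x0) -> sup (range f) = f x0.
Proof.
move=> hf; apply/le_anti/andP; split.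
  apply: ge_sup; first by exists (f x0), x0.
  by move=> _ [x _ <-].
apply: sup_upper_bound; last by exists x0.
split; first by exists (f x0), x0.
by exists (f x0) => _ [x _ <-].
Qed.

Lemma Vrem_bound (Q : S -> A -> S -> R) (rw : nat -> S -> A -> R) pi :
  (forall s a s', 0 <= Q s a s') -> (forall s a, \sum_s' Q s a s' = 1) ->
  (forall h s a, 0 <= rw h s a <= 1) ->
  forall n h s, 0 <= Vrem Q rw pi n h s <= n%:R.
Proof.
move=> Q0 Q1 r01; elim=> [|n IH] h s /=; first by rewrite lexx.
have /andP[ra rb] := r01 h s (pi h s).
apply/andP; split.
  apply: addr_ge0 => //; apply: sumr_ge0 => s' _; apply: mulr_ge0 => //.
  by case/andP: (IH h.+1 s').
rewrite -natr1 addrC; apply: lerD => //.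
apply: (@le_trans _ _ (\sum_s' Q s (pi h s) s' * n%:R)).
  apply: ler_sum => s' _; apply: ler_wpM2l => //; by case/andP: (IH h.+1 s').
by rewrite -mulr_suml Q1 mul1r.
Qed.

Lemma diff_bound (p q f : S -> R) (M : R) :
  (forall s, 0 <= p s) -> \sum_s p s = 1 ->
  (forall s, 0 <= q s) -> \sum_s q s = 1 ->
  (forall s, 0 <= f s <= M) ->
  `|\sum_s (p s - q s) * f s| <= M.
Proof.
move=> p0 p1 q0 q1 fb.
have hb : forall w : S -> R, (forall s, 0 <= w s) -> \sum_s w s = 1 ->
    0 <= \sum_s w s * f s <= M.
  move=> w w0 w1; apply/andP; split.
    apply: sumr_ge0 => s _; apply: mulr_ge0 => //; by case/andP: (fb s).
  apply: (@le_trans _ _ (\sum_s w s * M)).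
    apply: ler_sum => s _; apply: ler_wpM2l => //; by case/andP: (fb s).
  by rewrite -mulr_suml w1 mul1r.
have -> : \sum_s (p s - q s) * f s = \sum_s p s * f s - \sum_s q s * f s.
  by rewrite -sumrB; apply: eq_bigr => s _; rewrite mulrBl.
have /andP[a1 a2] := hb p p0 p1; have /andP[b1 b2] := hb q q0 q1.
rewrite ler_norml; apply/andP; split; lra.
Qed.

Lemma Vrem_ext (Q : S -> A -> S -> R) rw pi pi' n h s :
  (forall k, (h <= k)%N -> pi k = pi' k) ->
  Vrem Q rw pi n h s = Vrem Q rw pi' n h s.
Proof.
elim: n h s => [|n IH] h s Hk //=.
rewrite (Hk h (leqnn h)); congr (_ + _); apply: eq_bigr => s' _.
rewrite IH // => k hk; apply: Hk; exact: ltnW.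
Qed.

Lemma Vpi_le_Vstar (Q : S -> A -> S -> R) rw H pi h s :
  (forall s a s', 0 <= Q s a s') -> (forall s a, \sum_s' Q s a s' = 1) ->
  (forall h s a, 0 <= rw h s a <= 1) ->
  Vpi Q rw H pi h s <= Vstar Q rw H h s.
Proof.
move=> Q0 Q1 r01; rewrite /Vstar; apply: sup_upper_bound; last by exists pi.
split; first by exists (Vpi Q rw H pi h s), pi.
exists (H - h)%:R => _ [p _ <-]; rewrite /Vpi.
by case/andP: (Vrem_bound Q rw p Q0 Q1 r01 (H - h) h s).
Qed.

Variables (K : nat) (lam : S -> A -> 'I_K -> R) (PK : 'I_K -> S -> R)
  (j : 'I_K) (Pj : S -> R) (r : S -> A -> R) (H : nat).
Hypothesis lam0 : forall s a k, 0 <= lam s a k.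
Hypothesis lam1 : forall s a, \sum_(k < K) lam s a k = 1.
Hypothesis PK0 : forall k s, 0 <= PK k s.
Hypothesis PK1 : forall k, \sum_s PK k s = 1.
Hypothesis Pj0 : forall s, 0 <= Pj s.
Hypothesis Pj1 : \sum_s Pj s = 1.
Hypothesis r01 : forall s a, 0 <= r s a <= 1.

Definition Ph := anchor_kernel lam PK.
Definition Pt := anchor_kernel lam (tildePK PK j Pj).
Definition rh := fun _ : nat => r.
Definition uof pi := fun h : nat =>
  \sum_(s' : S) (PK j s' - Pj s') * Vpi Ph rh H pi h.+1 s'.

Lemma kernel_split s a s' :
  Ph s a s' = Pt s a s' + lam s a j * (PK j s' - Pj s').
Proof.
rewrite /Ph /Pt /anchor_kernel (bigD1 j) //= [in RHS](bigD1 j) //= /tildePK eqxx.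
rewrite [X in _ = _ + X + _](eq_bigr (fun k => lam s a k * PK k s')) => [|k /negbTE -> //].
ring.
Qed.

Lemma sum_split s a (f : S -> R) :
  \sum_s' Ph s a s' * f s' = \sum_s' Pt s a s' * f s'
     + lam s a j * \sum_s' (PK j s' - Pj s') * f s'.
Proof.
by rewrite mulr_sumr -big_split; apply: eq_bigr => s' _; rewrite kernel_split /= mulrDl -mulrA.
Qed.

Lemma tPK0 k s : 0 <= tildePK PK j Pj k s.
Proof. by rewrite /tildePK; case: (k == j). Qed.

Lemma Ph0 s a s' : 0 <= Ph s a s'.
Proof. apply: sumr_ge0 => k _; exact: mulr_ge0. Qed.
Lemma Pt0 s a s' : 0 <= Pt s a s'.
Proof. apply: sumr_ge0 => k _; apply: mulr_ge0 => //; exact: tPK0. Qed.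
Lemma Ph1 s a : \sum_s' Ph s a s' = 1.
Proof.
rewrite /Ph /anchor_kernel exchange_big /= -(lam1 s a); apply: eq_bigr => k _.
by rewrite -mulr_sumr PK1 mulr1.
Qed.

Lemma rh01 h s a : 0 <= rh h s a <= 1.
Proof. exact: r01. Qed.

Lemma equiv_V pi n h s : (H - h = n)%N ->
  Vrem Ph rh pi n h s = Vrem Pt (tilde_reward r lam j (uof pi)) pi n h s.
Proof.
elim: n h s => [|n IH] h s Hn //=.
have Hn' : (H - h.+1 = n)%N by rewrite subnS Hn.
rewrite /tilde_reward /uof /Vpi Hn' sum_split.
under [in RHS]eq_bigr => s' _ do rewrite -(IH h.+1 s' Hn').
rewrite /rh; ring.
Qed.

Lemma equiv_Q pi h s a :
  Qpi Ph rh H pi h s a = Qpi Pt (tilde_reward r lam j (uof pi)) H pi h s a.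
Proof.
rewrite /Qpi /Vpi.
under [in RHS]eq_bigr => s' _ do rewrite -(equiv_V pi (H - h.+1) h.+1 s' (erefl _)).
rewrite sum_split /tilde_reward /uof /Vpi /rh; ring.
Qed.

Lemma u_bound pi h : `|uof pi h| <= (H - h.+1)%:R.
Proof.
apply: diff_bound => //; first by move=> s; rewrite /Vpi; apply: Vrem_bound;
  [exact: Ph0 | exact: Ph1 | exact: rh01].
Qed.

Variable pihat : nat -> S -> A.
Hypothesis Hopt : forall h s, (h < H)%N -> Vpi Ph rh H pihat h s = Vstar Ph rh H h s.

Lemma Vstar_eq h s : Vstar Ph rh H h s = Vpi Ph rh H pihat h s.
Proof.
case: (ltnP h H) => hH; first by rewrite Hopt.
have E : forall p, Vpi Ph rh H p h s = 0.
  by move=> p; rewrite /Vpi; have -> : (H - h = 0)%N by apply/eqP; rewrite subn_eq0.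
rewrite /Vstar; apply: sup_attained => p; by rewrite !E.
Qed.

Lemma Vpi_le_Vstar' pi h s : Vpi Ph rh H pi h s <= Vstar Ph rh H h s.
Proof. apply: Vpi_le_Vstar; [exact: Ph0 | exact: Ph1 | exact: rh01]. Qed.

Lemma dominate pi n h s : (H - h = n)%N ->
  Vrem Pt (tilde_reward r lam j (uof pihat)) pi n h s <= Vrem Ph rh pihat n h s.
Proof.
elim: n h s => [|n IH] h s Hn /=; first by [].
have Hn' : (H - h.+1 = n)%N by rewrite subnS Hn.
set a := pi h s.
pose pi' := fun k x => if k == h then a else pihat k x.
apply: (@le_trans _ _ (tilde_reward r lam j (uof pihat) h s a +
   \sum_s' Pt s a s' * Vrem Ph rh pihat n h.+1 s')).
  rewrite lerD2l; apply: ler_sum => s' _; apply: ler_wpM2l; first exact: Pt0.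
  exact: IH.
have -> : tilde_reward r lam j (uof pihat) h s a +
   \sum_s' Pt s a s' * Vrem Ph rh pihat n h.+1 s' = Vpi Ph rh H pi' h s.
  have E : Vrem Ph rh pi' n h.+1 = Vrem Ph rh pihat n h.+1.
    apply: boolp.funext => s'; apply: Vrem_ext => k hk.
    rewrite /pi'; have -> : (k == h) = false by apply/negbTE; rewrite neq_ltn hk orbT.
    by [].
  have Ea : pi' h s = a by rewrite /pi' eqxx.
  rewrite /Vpi Hn /= E Ea /tilde_reward /uof /Vpi Hn' sum_split /rh; ring.
apply: (le_trans (Vpi_le_Vstar' pi' h s)).
by rewrite Vstar_eq /Vpi Hn.
Qed.

Lemma claim2 h s a : Qstar Ph rh H h s a = Qpi Ph rh H pihat h s a.
Proof.
rewrite /Qstar; apply: sup_attained => p; rewrite /Qpi lerD2l.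
apply: ler_sum => s' _; apply: ler_wpM2l; first exact: Ph0.
rewrite -Vstar_eq; exact: Vpi_le_Vstar'.
Qed.

Lemma claim3 h s a :
  Qpi Pt (tilde_reward r lam j (uof pihat)) H pihat h s a
  = Qstar Pt (tilde_reward r lam j (uof pihat)) H h s a.
Proof.
rewrite /Qstar; apply/esym; apply: sup_attained => p; rewrite /Qpi lerD2l.
apply: ler_sum => s' _; apply: ler_wpM2l; first exact: Pt0.
rewrite /Vpi -equiv_V //; exact: dominate.
Qed.

Lemma ustar_eq :
  (fun h => \sum_(s' : S) (PK j s' - Pj s') * Vstar Ph rh H h.+1 s') = uof pihat.
Proof.
apply: boolp.funext => h; rewrite /uof; apply: eq_bigr => s' _; by rewrite Vstar_eq.
Qed.

End Gen.
Theorem lemma18 (R : realType) (S A : finType) (H K N : nat)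
  (P : S -> A -> S -> R) (r : S -> A -> R)
  (phi : S -> A -> 'I_K -> R) (psi : 'I_K -> S -> R)
  (sk : 'I_K -> S) (ak : 'I_K -> A) (lam : S -> A -> 'I_K -> R)
  (smp : 'I_K -> 'I_N -> S)
  (j : 'I_K) (pi pihat : nat -> S -> A) :
  (* P is a transition kernel *)
  (forall s a s', 0 <= P s a s') ->
  (forall s a, \sum_(s' : S) P s a s' = 1) ->
  (* low-rank factorization *)
  (forall s a s', P s a s' = \sum_(k < K) phi s a k * psi k s') ->
  (* rewards in [0,1] *)
  (forall s a, 0 <= r s a <= 1) ->
  (* anchor-state assumption *)
  (forall s a k, 0 <= lam s a k) ->
  (forall s a, \sum_(k < K) lam s a k = 1) ->
  (forall s a k', phi s a k' = \sum_(k < K) lam s a k * phi (sk k) (ak k) k') ->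
  (0 < N)%N ->
  let PKhat := empirical R smp in
  let Phat := anchor_kernel lam PKhat in
  let rhat := fun (_ : nat) => r in
  let Ptil := anchor_kernel lam (tildePK PKhat j (P (sk j) (ak j))) in
  (* pihat is an optimal policy of Mhat *)
  (forall h s, (h < H)%N -> Vpi Phat rhat H pihat h s = Vstar Phat rhat H h s) ->
  let upi := fun h : nat =>
    \sum_(s' : S) (PKhat j s' - P (sk j) (ak j) s') * Vpi Phat rhat H pi h.+1 s' in
  let ustar := fun h : nat =>
    \sum_(s' : S) (PKhat j s' - P (sk j) (ak j) s') * Vstar Phat rhat H h.+1 s' in
  forall h : nat, (h < H)%N ->
    (forall s a, Qpi Phat rhat H pi h s a
                 = Qpi Ptil (tilde_reward r lam j upi) H pi h s a) /\
    (forall s a, Qstar Phat rhat H h s a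
                 = Qpi Ptil (tilde_reward r lam j ustar) H pihat h s a) /\
    (forall s a, Qpi Ptil (tilde_reward r lam j ustar) H pihat h s a
                 = Qstar Ptil (tilde_reward r lam j ustar) H h s a) /\
    `|upi h| <= (H - h.+1)%:R /\
    `|ustar h| <= (H - h.+1)%:R.
Proof.
move=> P0 P1 _ r01 lam0 lam1 _ N0 PKhat Phat rhat Ptil Hopt upi ustar h hH.
have PK0 : forall k s, 0 <= PKhat k s.
  move=> k s; rewrite /PKhat /empirical; apply: divr_ge0 => //.
  by apply: sumr_ge0 => i _; apply: ler0n.
have PK1 : forall k, \sum_s PKhat k s = 1.
  move=> k; rewrite /PKhat /empirical -mulr_suml exchange_big /=.
  rewrite (eq_bigr (fun _ => 1)) => [|i _].
    rewrite sumr_const card_ord mulfV //.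
    by rewrite pnatr_eq0 -lt0n.
  rewrite (bigD1 (smp k i)) //= eqxx big1 ?addr0 // => s' hs'.
  by rewrite eq_sym (negbTE hs').
have Pj0 : forall s, 0 <= P (sk j) (ak j) s by move=> s; exact: P0.
have Pj1 : \sum_s P (sk j) (ak j) s = 1 by exact: P1.
have Hopt' : forall h s, (h < H)%N ->
  Vpi (Ph R S A K lam PKhat) (rh R S A r) H pihat h s =
  Vstar (Ph R S A K lam PKhat) (rh R S A r) H h s by exact: Hopt.
have eu : upi = uof R S A K lam PKhat j (P (sk j) (ak j)) r H pi by [].
have es : ustar = uof R S A K lam PKhat j (P (sk j) (ak j)) r H pihat.
  exact: (ustar_eq R S A K lam PKhat j (P (sk j) (ak j)) r H pihat Hopt').
split; [|split; [|split; [|split]]].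
- move=> s a; exact: (equiv_Q R S A K lam PKhat j (P (sk j) (ak j)) r H pi h s a).
- move=> s a; rewrite es.
  rewrite (claim2 R S A K lam PKhat r H lam0 lam1 PK0 PK1 r01 pihat Hopt' h s a).
  exact: (equiv_Q R S A K lam PKhat j (P (sk j) (ak j)) r H pihat h s a).
- move=> s a; rewrite es.
  exact: (claim3 R S A K lam PKhat j (P (sk j) (ak j)) r H lam0 lam1 PK0 PK1 Pj0 r01 pihat Hopt' h s a).
- rewrite eu; exact: (u_bound R S A K lam PKhat j (P (sk j) (ak j)) r H lam0 lam1 PK0 PK1 Pj0 Pj1 r01 pi h).
- rewrite es; exact: (u_bound R S A K lam PKhat j (P (sk j) (ak j)) r H lam0 lam1 PK0 PK1 Pj0 Pj1 r01 pihat h).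
Qed.
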